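(* Let $(P,\leq,{}',0,1)$ be an orthogonal lub-complete poset and $x,y,z\in P$. Then the following hold: (i) $x\rightarrow_K y\approx x\vee y'\vee \mathrm{Max}\,L(x',y)$ if $x\leq y$; $x\rightarrow_K y\approx y\vee \mathrm{Max}\,L(x',y')$ if $x\perp y$; $x\rightarrow_K y\approx x'\vee (x\wedge \mathrm{Min}\,U(x',y))$ if $y\leq x$; (ii) $x\rightarrow_K 1\approx x\vee x'$, $1\rightarrow_K x\approx x$; (iii) $x\rightarrow_K 0\approx x'$, $0\rightarrow_K x\approx x\vee x'$.
   Context: $(P,\leq,{}',0,1)$ is a bounded poset with an antitone involution ${}'$ ($x\leq y\Rightarrow y'\leq x'$, $x''=x$); $x\perp y$ means $x\leq y'$; orthogonal means $x\perp y$ implies the supremum $x\vee y$ exists; lub-complete means for every lower bound $x$ of a finite subset $M$ there is a maximal lower bound of $M$ above $x$. For $A\subseteq P$, $L(A)$ and $U(A)$ are the sets of lower and upper bounds, $L(x,y)=L(\{x,y\})$ etc.; $\mathrm{Max}\,A$ and $\mathrm{Min}\,A$ are the sets of maximal and minimal elements of $A$. For $y\in P$, $A,B\subseteq P$, $y\vee A=\{y\vee a\mid a\in A\}$, $A\vee B=\{a\vee b\mid a\in A,b\in B\}$ (when all these joins exist), similarly for $\wedge$. The Kalmbach implication is $x\rightarrow_K y:=\mathrm{Max}\,L(x',y)\vee \mathrm{Max}\,L(x',y')\vee (x\wedge \mathrm{Min}\,U(x',y))$, which is well defined in such a poset. Singletons are identified with elements. *)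

(* Defs.v *)
From Stdlib Require Import List Classical ClassicalDescription.

Record biposet := BiPoset {
  car :> Type;
  le : car -> car -> Prop;
  inv : car -> car;
  zero : car;
  one : car;
  le_refl : forall x, le x x;
  le_trans : forall x y z, le x y -> le y z -> le x z;
  le_antisym : forall x y, le x y -> le y x -> x = y;
  zero_le : forall x, le zero x;
  le_one : forall x, le x one;
  inv_antitone : forall x y, le x y -> le (inv y) (inv x);
  inv_inv : forall x, inv (inv x) = x
}.
Arguments le {b} _ _.
Arguments inv {b} _.
Arguments zero {b}.
Arguments one {b}.

Section Defs.
Variable P : biposet.

Definition pset := P -> Prop.

Definition perp (x y : P) : Prop := le x (inv y).

Definition is_sup (x y s : P) : Prop :=
  le x s /\ le y s /\ forall u, le x u -> le y u -> le s u.
Definition is_inf (x y s : P) : Prop :=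
  le s x /\ le s y /\ forall u, le u x -> le u y -> le u s.

Definition L (A : pset) : pset := fun z => forall a, A a -> le z a.
Definition U (A : pset) : pset := fun z => forall a, A a -> le a z.
Definition L2 (x y : P) : pset := L (fun a => a = x \/ a = y).
Definition U2 (x y : P) : pset := U (fun a => a = x \/ a = y).
Definition Max (A : pset) : pset :=
  fun z => A z /\ forall w, A w -> le z w -> w = z.
Definition Min (A : pset) : pset :=
  fun z => A z /\ forall w, A w -> le w z -> w = z.

Definition finite_set (A : pset) : Prop :=
  exists l : list P, forall z, A z <-> In z l.

Definition orthogonal : Prop :=
  forall x y : P, perp x y -> exists s, is_sup x y s.

Definition lub_complete : Prop :=
  forall M : pset, finite_set M ->
    forall x, L M x -> exists m, Max (L M) m /\ le x m.

(** Partially defined set-valued terms: None = undefined. *)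
Definition pterm := option pset.

Definition elem (x : P) : pterm := Some (fun z => z = x).
Definition sset (A : pset) : pterm := Some A.

Definition sjoin (A B : pterm) : pterm :=
  match A, B with
  | Some A, Some B =>
      if excluded_middle_informative
           (forall a b, A a -> B b -> exists s, is_sup a b s)
      then Some (fun s => exists a b, A a /\ B b /\ is_sup a b s)
      else None
  | _, _ => None
  end.

Definition smeet (A B : pterm) : pterm :=
  match A, B with
  | Some A, Some B =>
      if excluded_middle_informative
           (forall a b, A a -> B b -> exists s, is_inf a b s)
      then Some (fun s => exists a b, A a /\ B b /\ is_inf a b s)
      else None
  | _, _ => None
  end.

Definition kequiv (t s : pterm) : Prop :=
  match t, s with
  | None, None => True
  | Some A, Some B => forall z, A z <-> B z
  | _, _ => False
  end.

Definition kalmbach (x y : P) : pterm :=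
  sjoin (sjoin (sset (Max (L2 (inv x) y))) (sset (Max (L2 (inv x) (inv y)))))
        (smeet (elem x) (sset (Min (U2 (inv x) y)))).

End Defs.

Arguments perp {P} _ _.
Arguments is_sup {P} _ _ _.
Arguments is_inf {P} _ _ _.
Arguments L {P} _ _.
Arguments U {P} _ _.
Arguments L2 {P} _ _ _.
Arguments U2 {P} _ _ _.
Arguments Max {P} _ _.
Arguments Min {P} _ _.
Arguments elem {P} _.
Arguments sset {P} _.
Arguments sjoin {P} _ _.
Arguments smeet {P} _ _.
Arguments kequiv {P} _ _.
Arguments kalmbach {P} _ _.

(* Main.v *)
Require Import Defs.
From Stdlib Require Import List Classical ClassicalDescription FunctionalExtensionality PropExtensionality.

Local Notation EL a := (@Some (pset _) (fun z => z = a)).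

Lemma elem_eq (P : biposet) (a : P) : elem a = EL a.
Proof. reflexivity. Qed.

Ltac seteq := apply functional_extensionality; intro; apply propositional_extensionality; split.

Lemma sup_uniq (P : biposet) (a b s t : P) : is_sup a b s -> is_sup a b t -> s = t.
Proof.
  intros [H1 [H2 H3]] [G1 [G2 G3]]. apply le_antisym; auto.
Qed.

Lemma inf_uniq (P : biposet) (a b s t : P) : is_inf a b s -> is_inf a b t -> s = t.
Proof.
  intros [H1 [H2 H3]] [G1 [G2 G3]]. apply le_antisym; auto.
Qed.

Lemma sup_comm (P : biposet) (a b s : P) : is_sup a b s -> is_sup b a s.
Proof. intros [H1 [H2 H3]]. split; [|split]; auto. Qed.

Lemma sup_le (P : biposet) (a b : P) : le a b -> is_sup a b b.
Proof. intros H. split; [|split]; auto using le_refl. Qed.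

Lemma sup_le' (P : biposet) (a b : P) : le b a -> is_sup a b a.
Proof. intros H. split; [|split]; auto using le_refl. Qed.

Lemma inf_le (P : biposet) (a b : P) : le a b -> is_inf a b a.
Proof. intros H. split; [|split]; auto using le_refl. Qed.

Lemma inf_le' (P : biposet) (a b : P) : le b a -> is_inf a b b.
Proof. intros H. split; [|split]; auto using le_refl. Qed.

Lemma kequiv_refl (P : biposet) (t : pterm P) : kequiv t t.
Proof. destruct t; simpl; tauto. Qed.

Lemma inv_one (P : biposet) : inv (@one P) = zero.
Proof.
  apply le_antisym; [|apply zero_le].
  rewrite <- (inv_inv P zero). apply inv_antitone. apply le_one.
Qed.

Lemma inv_zero (P : biposet) : inv (@zero P) = one.
Proof. rewrite <- (inv_one P), inv_inv. reflexivity. Qed.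

Lemma inv_le (P : biposet) (a b : P) : le (inv a) b -> le (inv b) a.
Proof. intros H. rewrite <- (inv_inv P a). apply inv_antitone. exact H. Qed.

Lemma le_inv (P : biposet) (a b : P) : le a (inv b) -> le b (inv a).
Proof. intros H. rewrite <- (inv_inv P b). apply inv_antitone. exact H. Qed.

Lemma inf_exists (P : biposet) (Horth : orthogonal P) (x m : P) :
  le (inv x) m -> exists i, is_inf x m i.
Proof.
  intros H. destruct (Horth (inv x) (inv m)) as [s [S1 [S2 S3]]].
  { unfold perp. rewrite inv_inv. exact H. }
  exists (inv s). split; [|split].
  - apply inv_le. exact S1.
  - apply inv_le. exact S2.
  - intros u U1 U2. apply le_inv. apply S3; apply inv_antitone; assumption.
Qed.

Lemma sjoin_def (P : biposet) (A B : pset P) :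
  (forall a b, A a -> B b -> exists s, is_sup a b s) ->
  sjoin (Some A) (Some B) = Some (fun s => exists a b, A a /\ B b /\ is_sup a b s).
Proof.
  intros H. unfold sjoin. destruct excluded_middle_informative; [reflexivity|contradiction].
Qed.

Lemma smeet_def (P : biposet) (A B : pset P) :
  (forall a b, A a -> B b -> exists s, is_inf a b s) ->
  smeet (Some A) (Some B) = Some (fun s => exists a b, A a /\ B b /\ is_inf a b s).
Proof.
  intros H. unfold smeet. destruct excluded_middle_informative; [reflexivity|contradiction].
Qed.

Lemma join_elem (P : biposet) (a b s : P) : is_sup a b s -> sjoin (EL a) (EL b) = EL s.
Proof.
  intros H. try unfold elem. rewrite sjoin_def.
  - f_equal. seteq.
    + intros [a0 [b0 [-> [-> Hs]]]]. eapply sup_uniq; eauto.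
    + intros ->. eauto.
  - intros a0 b0 -> ->. eauto.
Qed.

Lemma meet_elem (P : biposet) (a b s : P) : is_inf a b s -> smeet (EL a) (EL b) = EL s.
Proof.
  intros H. try unfold elem. rewrite smeet_def.
  - f_equal. seteq.
    + intros [a0 [b0 [-> [-> Hs]]]]. eapply inf_uniq; eauto.
    + intros ->. eauto.
  - intros a0 b0 -> ->. eauto.
Qed.

Lemma sjoin_set_elem (P : biposet) (A : pset P) (b : P) :
  (forall a, A a -> exists s, is_sup a b s) ->
  sjoin (Some A) (EL b) = Some (fun s => exists a, A a /\ is_sup a b s).
Proof.
  intros H. try unfold elem. rewrite sjoin_def.
  - f_equal. seteq.
    + intros [a0 [b0 [Ha [-> Hs]]]]. eauto.
    + intros [a0 [Ha Hs]]. eauto.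
  - intros a0 b0 Ha ->. eauto.
Qed.

Lemma sjoin_elem_set (P : biposet) (A : pset P) (b : P) :
  (forall a, A a -> exists s, is_sup b a s) ->
  sjoin (EL b) (Some A) = Some (fun s => exists a, A a /\ is_sup b a s).
Proof.
  intros H. try unfold elem. rewrite sjoin_def.
  - f_equal. seteq.
    + intros [a0 [b0 [-> [Ha Hs]]]]. eauto.
    + intros [a0 [Ha Hs]]. eauto.
  - intros a0 b0 -> Ha. eauto.
Qed.

Lemma sjoin_absorb (P : biposet) (A : pset P) (b : P) :
  (exists a, A a) -> (forall a, A a -> le a b) -> sjoin (Some A) (EL b) = EL b.
Proof.
  intros [a0 Ha0] H. rewrite sjoin_set_elem.
  - try unfold elem. f_equal. seteq.
    + intros [a [Ha Hs]]. eapply sup_uniq; eauto using sup_le.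
    + intros ->. exists a0. split; auto using sup_le.
  - intros a Ha. exists b. auto using sup_le.
Qed.

Lemma sjoin_absorb2 (P : biposet) (S : pset P) (c : P) :
  (forall s, S s -> le c s) -> sjoin (Some S) (EL c) = Some S.
Proof.
  intros H. rewrite sjoin_set_elem.
  - f_equal. seteq.
    + intros [a [Ha Hs]]. replace x with a; auto. eapply sup_uniq; eauto using sup_le'.
    + intros Hx. exists x. split; auto using sup_le'.
  - intros a Ha. exists a. auto using sup_le'.
Qed.

Lemma smeet_absorb (P : biposet) (M : pset P) (x : P) :
  (exists m, M m) -> (forall m, M m -> le x m) -> smeet (EL x) (Some M) = EL x.
Proof.
  intros [m0 Hm0] H. try unfold elem. rewrite smeet_def.
  - f_equal. seteq.
    + intros [a [m [-> [Hm Hi]]]]. eapply inf_uniq; eauto using inf_le.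
    + intros ->. exists x, m0. split; auto using inf_le.
  - intros a m -> Hm. exists x. auto using inf_le.
Qed.

Lemma Max_L2_le (P : biposet) (p q : P) : le p q -> Max (L2 p q) = (fun z => z = p).
Proof.
  intros H. seteq.
  - intros [H1 H2]. symmetry. apply H2.
    + intros a [-> | ->]; auto using le_refl.
    + apply H1; auto.
  - intros ->. split.
    + intros a [-> | ->]; auto using le_refl.
    + intros w Hw Hle. apply le_antisym; try exact Hle; apply Hw; auto.
Qed.

Lemma Max_L2_ge (P : biposet) (p q : P) : le q p -> Max (L2 p q) = (fun z => z = q).
Proof.
  intros H. seteq.
  - intros [H1 H2]. symmetry. apply H2.
    + intros a [-> | ->]; auto using le_refl.
    + apply H1; auto.
  - intros ->. split.
    + intros a [-> | ->]; auto using le_refl.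
    + intros w Hw Hle. apply le_antisym; try exact Hle; apply Hw; auto.
Qed.

Lemma Min_U2_le (P : biposet) (p q : P) : le p q -> Min (U2 p q) = (fun z => z = q).
Proof.
  intros H. seteq.
  - intros [H1 H2]. symmetry. apply H2.
    + intros a [-> | ->]; auto using le_refl.
    + apply H1; auto.
  - intros ->. split.
    + intros a [-> | ->]; auto using le_refl.
    + intros w Hw Hle. apply le_antisym; try exact Hle; apply Hw; auto.
Qed.

Lemma Min_U2_ge (P : biposet) (p q : P) : le q p -> Min (U2 p q) = (fun z => z = p).
Proof.
  intros H. seteq.
  - intros [H1 H2]. symmetry. apply H2.
    + intros a [-> | ->]; auto using le_refl.
    + apply H1; auto.
  - intros ->. split.
    + intros a [-> | ->]; auto using le_refl.
    + intros w Hw Hle. apply le_antisym; try exact Hle; apply Hw; auto.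
Qed.

Lemma Max_L2_ne (P : biposet) (Hlub : lub_complete P) (p q : P) : exists m, Max (L2 p q) m.
Proof.
  destruct (Hlub (fun a => a = p \/ a = q)) with (x := @zero P) as [m [Hm _]].
  - exists (p :: q :: nil). intros z; simpl; split; intuition.
  - intros a _. apply zero_le.
  - exists m. exact Hm.
Qed.

Lemma Min_U2_ne (P : biposet) (Hlub : lub_complete P) (p q : P) : exists m, Min (U2 p q) m.
Proof.
  destruct (Max_L2_ne P Hlub (inv p) (inv q)) as [k [Hk1 Hk2]].
  exists (inv k). split.
  - intros a [-> | ->]; apply le_inv; apply Hk1; auto.
  - intros w Hw Hle.
    assert (E : inv w = k).
    { apply Hk2.
      - intros a [-> | ->]; apply inv_antitone; apply Hw; auto.
      - apply le_inv. exact Hle. }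
    rewrite <- E, inv_inv. reflexivity.
Qed.

Lemma L2_le1 (P : biposet) (p q z : P) : L2 p q z -> le z p.
Proof. intros H. apply H; auto. Qed.
Lemma L2_le2 (P : biposet) (p q z : P) : L2 p q z -> le z q.
Proof. intros H. apply H; auto. Qed.
Lemma U2_le1 (P : biposet) (p q z : P) : U2 p q z -> le p z.
Proof. intros H. apply H; auto. Qed.
Lemma U2_le2 (P : biposet) (p q z : P) : U2 p q z -> le q z.
Proof. intros H. apply H; auto. Qed.

Lemma sup3a (P : biposet) (a b c s t p : P) :
  is_sup a b s -> is_sup s c t -> is_sup c b p -> is_sup p a t.
Proof.
  intros [S1 [S2 S3]] [T1 [T2 T3]] [P1 [P2 P3]]. split; [|split].
  - apply P3; [exact T2|]. eapply le_trans; [exact S2|exact T1].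
  - eapply le_trans; eauto.
  - intros u U1 U2. apply T3; [apply S3|]; auto; eapply le_trans; eauto.
Qed.

Lemma sup3b (P : biposet) (a b c s t p : P) :
  is_sup c b p -> is_sup p a t -> is_sup a b s -> is_sup s c t.
Proof.
  intros [P1 [P2 P3]] [T1 [T2 T3]] [S1 [S2 S3]]. split; [|split].
  - apply S3; [exact T2|]. eapply le_trans; [exact P2|exact T1].
  - eapply le_trans; [exact P1|exact T1].
  - intros u U1 U2. apply T3.
    + apply P3; [exact U2|]. eapply le_trans; [exact S2|exact U1].
    + eapply le_trans; [exact S1|exact U1].
Qed.

Lemma key_perp (P : biposet) (Horth : orthogonal P) (x y b c : P) :
  le x (inv y) -> Max (L2 (inv x) (inv y)) b -> is_inf x (inv x) c -> le c b.
Proof.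
  intros Hp [Hb1 Hb2] [C1 [C2 C3]].
  assert (Hbx : le b (inv x)) by (eapply L2_le1; eauto).
  assert (Hby : le b (inv y)) by (eapply L2_le2; eauto).
  destruct (Horth c b) as [d [D1 [D2 D3]]].
  { unfold perp. eapply le_trans; [exact C1|]. apply le_inv. exact Hbx. }
  assert (E : d = b).
  { apply Hb2; [|exact D2]. intros a [-> | ->]; apply D3; auto. eapply le_trans; [exact C1|exact Hp]. }
  rewrite <- E. exact D1.
Qed.

Theorem proposition4 (P : biposet) (Horth : orthogonal P) (Hlub : lub_complete P)
  (x y z : P) :
  (* (i) *)
  (le x y ->
     kequiv (kalmbach x y)
            (sjoin (sjoin (elem x) (elem (inv y))) (sset (Max (L2 (inv x) y))))) /\
  (perp x y ->
     kequiv (kalmbach x y)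
            (sjoin (elem y) (sset (Max (L2 (inv x) (inv y)))))) /\
  (le y x ->
     kequiv (kalmbach x y)
            (sjoin (elem (inv x)) (smeet (elem x) (sset (Min (U2 (inv x) y)))))) /\
  (* (ii) *)
  kequiv (kalmbach x one) (sjoin (elem x) (elem (inv x))) /\
  kequiv (kalmbach one x) (elem x) /\
  (* (iii) *)
  kequiv (kalmbach x zero) (elem (inv x)) /\
  kequiv (kalmbach zero x) (sjoin (elem x) (elem (inv x))).
Proof.
  unfold kalmbach, sset. rewrite ?elem_eq.
  split; [|split; [|split; [|split; [|split; [|split]]]]].
  -
    intros Hxy.
    assert (Hyx : le (inv y) (inv x)) by (apply inv_antitone; exact Hxy).
    rewrite (Max_L2_ge P (inv x) (inv y) Hyx).
    rewrite smeet_absorb.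
    2: apply Min_U2_ne; exact Hlub.
    2: { intros m [Hm _]. eapply le_trans; [exact Hxy|]. eapply U2_le2; eauto. }
    rewrite sjoin_set_elem.
    2: { intros a Ha. apply Horth. unfold perp. rewrite inv_inv. eapply L2_le2; apply Ha. }
    rewrite sjoin_set_elem.
    2: { intros s [a [[Ha _] [S1 [S2 S3]]]]. apply Horth. unfold perp.
         apply S3; auto; eapply L2_le1; eauto. }
    destruct (Horth x (inv y)) as [p Hp].
    { unfold perp. rewrite inv_inv. exact Hxy. }
    rewrite (join_elem P x (inv y) p Hp).
    rewrite sjoin_elem_set.
    2: { intros a Ha.
         destruct (Horth a (inv y)) as [s Hs].
         { unfold perp. rewrite inv_inv. eapply L2_le2; apply Ha. }
         destruct (Horth s x) as [t Ht].
         { unfold perp. destruct Hs as [S1 [S2 S3]]. apply S3; auto.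
           eapply L2_le1; apply Ha. }
         exists t. eapply sup3a; eauto. }
    simpl. intros t. split.
    + intros [s [[a [Ha Hs]] Ht]]. exists a. split; auto. eapply sup3a; eauto.
    + intros [a [Ha Ht]].
      destruct (Horth a (inv y)) as [s Hs].
      { unfold perp. rewrite inv_inv. eapply L2_le2; apply Ha. }
      exists s. split; eauto. eapply sup3b; eauto.
  -
    intros Hp. unfold perp in Hp.
    assert (Hyx : le y (inv x)) by (apply le_inv; exact Hp).
    rewrite (Max_L2_ge P (inv x) y Hyx).
    rewrite (Min_U2_ge P (inv x) y Hyx).
    destruct (inf_exists P Horth x (inv x) (le_refl P _)) as [c Hc].
    rewrite (meet_elem P x (inv x) c Hc).
    rewrite sjoin_elem_set.
    2: { intros b Hb. apply Horth. unfold perp. apply le_inv. eapply L2_le2; apply Hb. }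
    rewrite sjoin_absorb2.
    2: { intros s [b [Hb [S1 [S2 S3]]]]. eapply le_trans; [|exact S2].
         exact (key_perp P Horth x y b c Hp Hb Hc). }
    apply kequiv_refl.
  -
    intros Hyx.
    assert (Hxy : le (inv x) (inv y)) by (apply inv_antitone; exact Hyx).
    rewrite (Max_L2_le P (inv x) (inv y) Hxy).
    rewrite sjoin_absorb.
    2: apply Max_L2_ne; exact Hlub.
    2: { intros a Ha. eapply L2_le1; apply Ha. }
    apply kequiv_refl.
  -
    rewrite inv_one.
    rewrite (Max_L2_le P (inv x) one (le_one P _)).
    rewrite (Max_L2_ge P (inv x) zero (zero_le P _)).
    rewrite (Min_U2_le P (inv x) one (le_one P _)).
    rewrite (meet_elem P x one x (inf_le P _ _ (le_one P _))).
    rewrite (join_elem P (inv x) zero (inv x) (sup_le' P _ _ (zero_le P _))).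
    destruct (Horth (inv x) x) as [s Hs].
    { unfold perp. apply le_refl. }
    rewrite (join_elem P (inv x) x s Hs).
    rewrite (join_elem P x (inv x) s (sup_comm P _ _ _ Hs)).
    apply kequiv_refl.
  -
    rewrite inv_one.
    rewrite (Max_L2_le P zero x (zero_le P _)).
    rewrite (Max_L2_le P zero (inv x) (zero_le P _)).
    rewrite (Min_U2_le P zero x (zero_le P _)).
    rewrite (meet_elem P one x x (inf_le' P _ _ (le_one P _))).
    rewrite (join_elem P zero zero zero (sup_le P _ _ (zero_le P _))).
    rewrite (join_elem P zero x x (sup_le P _ _ (zero_le P _))).
    apply kequiv_refl.
  -
    rewrite inv_zero.
    rewrite (Max_L2_ge P (inv x) zero (zero_le P _)).
    rewrite (Max_L2_le P (inv x) one (le_one P _)).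
    rewrite (Min_U2_ge P (inv x) zero (zero_le P _)).
    destruct (inf_exists P Horth x (inv x) (le_refl P _)) as [c Hc].
    rewrite (meet_elem P x (inv x) c Hc).
    rewrite (join_elem P zero (inv x) (inv x) (sup_le P _ _ (zero_le P _))).
    rewrite (join_elem P (inv x) c (inv x) (sup_le' P _ _ (proj1 (proj2 Hc)))).
    apply kequiv_refl.
  -
    rewrite inv_zero.
    rewrite (Max_L2_ge P one x (le_one P _)).
    rewrite (Max_L2_ge P one (inv x) (le_one P _)).
    rewrite (Min_U2_ge P one x (le_one P _)).
    rewrite (meet_elem P zero one zero (inf_le P _ _ (zero_le P _))).
    destruct (Horth x (inv x)) as [s Hs].
    { unfold perp. rewrite inv_inv. apply le_refl. }
    rewrite (join_elem P x (inv x) s Hs).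
    rewrite (join_elem P s zero s (sup_le' P _ _ (zero_le P _))).
    apply kequiv_refl.
Qed.
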